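(* Let $m>1$ and let $\gamma$ be a permutation of $(\mathbb{F}_2)^m$ with $0\gamma=0$. Then $\mathcal{N}(\gamma)\neq0$ if and only if $\gamma$ is strongly $1$-anti-invariant.
   Context: For Boolean functions $f,g:(\mathbb{F}_2)^m\to\mathbb{F}_2$, $\mathrm{d}(f,g)=|\{x: f(x)\ne g(x)\}|$; $\mathcal{A}_m$ is the set of affine Boolean functions (algebraic degree at most $1$); the non-linearity of $f$ is $\mathcal{N}(f)=\min\{\mathrm{d}(f,\alpha):\alpha\in\mathcal{A}_m\}$. For a vectorial function $F:(\mathbb{F}_2)^m\to(\mathbb{F}_2)^m$ with coordinate functions $F_1,\dots,F_m$ and $v\ne0$, the component is ${}_vF=\sum_i v_iF_i$, and $\mathcal{N}(F)=\min\{\mathcal{N}({}_vF): v\in(\mathbb{F}_2)^m\setminus\{0\}\}$. $F$ is strongly $1$-anti-invariant if for any two subspaces $U,W$ of $(\mathbb{F}_2)^m$ with $F(U)=W$, either $\dim U=\dim W<m-1$ or $U=W=(\mathbb{F}_2)^m$. *)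

(* Defs.v *)
(* (F_2)^m is modelled as row vectors 'rV['F_2]_m;
   subspaces are represented by square matrices via their row spaces (mxalgebra). *)
From HB Require Import structures.
From mathcomp Require Import all_boot all_order all_algebra all_fingroup.
Set Implicit Arguments. Unset Strict Implicit. Unset Printing Implicit Defensive.
Import GRing.Theory.
Local Open Scope ring_scope.

Notation vecF2 m := 'rV['F_2]_m.

Definition bdist (m : nat) (f g : vecF2 m -> 'F_2) : nat :=
  #|[set x : vecF2 m | f x != g x]|.

Definition affine_fun (m : nat) (a : 'cV['F_2]_m) (b : 'F_2) : vecF2 m -> 'F_2 :=
  fun x => (x *m a) 0 0 + b.

Definition nonlin (m : nat) (f : vecF2 m -> 'F_2) : nat :=
  \big[minn/(2 ^ m)%N]_(a : 'cV['F_2]_m) \big[minn/(2 ^ m)%N]_(b : 'F_2)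
     bdist f (affine_fun a b).

Definition component (m : nat) (F : vecF2 m -> vecF2 m) (v : vecF2 m)
  : vecF2 m -> 'F_2 := fun x => \sum_(i < m) v 0 i * F x 0 i.

Definition vnonlin (m : nat) (F : vecF2 m -> vecF2 m) : nat :=
  \big[minn/(2 ^ m)%N]_(v : vecF2 m | v != 0) nonlin (component F v).

Definition maps_onto (m : nat) (F : vecF2 m -> vecF2 m) (U W : 'M['F_2]_m) : Prop :=
  forall w : vecF2 m, (w <= W)%MS <-> exists2 u : vecF2 m, (u <= U)%MS & F u = w.

Definition strongly_1_anti_invariant (m : nat) (F : vecF2 m -> vecF2 m) : Prop :=
  forall U W : 'M['F_2]_m, maps_onto F U W ->
    (\rank U = \rank W /\ (\rank U < m - 1)%N) \/ (row_full U /\ row_full W).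

(* Main.v *)
Require Import Defs.
From HB Require Import structures.
From mathcomp Require Import all_boot all_order all_algebra all_fingroup.
From mathcomp Require Import mxabelem zify.
Set Implicit Arguments. Unset Strict Implicit. Unset Printing Implicit Defensive.
Import GRing.Theory.
Local Open Scope ring_scope.

Lemma F2_eq (p q : 'F_2) : (p == 0) = (q == 0) -> p = q.
Proof.
by case: p => [[|[|?]] ?]; case: q => [[|[|?]] ?] //= _; apply: val_inj.
Qed.

Lemma mx11_eq0 (M : 'M['F_2]_1) : (M == 0) = (M 0 0 == 0).
Proof.
apply/eqP/eqP => [->|h]; first by rewrite mxE.
by apply/matrixP => i j; rewrite !ord1 h mxE.
Qed.

Lemma rank_maps m (g : {perm 'rV['F_2]_m}) U W :
  maps_onto (fun x => g x) U W -> \rank U = \rank W.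
Proof.
move=> hUW.
have E : rowg W = g @: rowg U.
  apply/setP => w; rewrite inE; apply/idP/imsetP.
  - by move/hUW => [u hu <-]; exists u; rewrite ?inE.
  - by case=> u; rewrite inE => hu ->; apply/hUW; exists u.
have := card_rowg W; rewrite E card_imset; last exact: perm_inj.
by rewrite !card_rowg card_Fp // => /eqP; rewrite eqn_exp2l // => /eqP.
Qed.

Lemma hyper m (U : 'M['F_2]_m) : \rank U = (m - 1)%N -> (0 < m)%N ->
  exists a : 'cV['F_2]_m, forall u : 'rV_m, (u <= U)%MS = ((u *m a) 0 0 == 0).
Proof.
move=> hr hm.
set C := cokermx U.
have rC : \rank C = 1%N by rewrite mxrank_coker hr; lia.
have [j hj] : exists j, col j C != 0.
  apply/existsP; apply: contraT; rewrite negb_exists => /forallP h.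
  suff : C = 0 by move=> C0; move: rC; rewrite C0 mxrank0.
  apply/matrixP => i k; have := h k; rewrite negbK => /eqP/matrixP/(_ i 0).
  by rewrite !mxE.
have sub1 : (row j C^T <= C^T)%MS by apply: row_sub.
have : (C^T <= row j C^T)%MS.
  rewrite -(mxrank_leqif_sup sub1).2 mxrank_tr rC rank_rV.
  by rewrite -tr_col trmx_eq0 hj.
case/submxP => D hD.
exists (col j C) => u.
rewrite submxE -/C -mx11_eq0.
apply/eqP/eqP => h.
  by rewrite colE mulmxA h mul0mx.
have -> : C = col j C *m D^T.
  by apply/esym; rewrite -[col j C]trmxK tr_col -trmx_mul -hD trmxK.
by rewrite mulmxA h mul0mx.
Qed.

Lemma bigmin0 (I : finType) (P : pred I) (F : I -> nat) N : (0 < N)%N ->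
  \big[minn/N]_(i | P i) F i = 0%N -> exists2 i, P i & F i = 0%N.
Proof.
move=> hN h.
case: (boolP [exists i, P i && (F i == 0%N)]) => [/existsP [i /andP [hi /eqP hF]]|/existsPn hn].
  by exists i.
suff : (0 < \big[minn/N]_(i | P i) F i)%N by rewrite h.
apply: (big_ind (fun x => 0 < x)%N) => //.
  by move=> x y hx hy; rewrite leq_min hx hy.
by move=> i hi; have := hn i; rewrite hi /= lt0n.
Qed.

Lemma bdist0 m (f g : vecF2 m -> 'F_2) : (forall x, f x = g x) -> bdist f g = 0%N.
Proof.
move=> h; apply/eqP; rewrite cards_eq0; apply/eqP/setP => x.
by rewrite inE in_set0 h eqxx.
Qed.

Lemma bdist0E m (f g : vecF2 m -> 'F_2) : bdist f g = 0%N -> forall x, f x = g x.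
Proof.
move/eqP; rewrite cards_eq0 => /eqP /setP h x.
by have := h x; rewrite inE in_set0 => /negbFE/eqP.
Qed.

Lemma compE m (F : vecF2 m -> vecF2 m) v x : component F v x = (F x *m v^T) 0 0.
Proof. by rewrite /component mxE; apply: eq_bigr => i _; rewrite mxE mulrC. Qed.

Lemma bigmin0' (I : finType) (P : pred I) (F : I -> nat) N i :
  P i -> F i = 0%N -> \big[minn/N]_(j | P j) F j = 0%N.
Proof.
move=> hi hF; have : i \in index_enum I by rewrite mem_index_enum.
elim: (index_enum I) => // j r IH; rewrite inE big_cons => /orP [/eqP <-|/IH ->].
  by rewrite hi hF min0n.
by case: (P j); rewrite ?minn0.
Qed.

Theorem proposition5p3 (m : nat) (hm : (1 < m)%N) (gamma : {perm 'rV['F_2]_m})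
  (h0 : gamma 0%R = 0%R) :
  vnonlin (fun x => gamma x) <> 0%N <-> strongly_1_anti_invariant (fun x => gamma x).
Proof.
have m0 : (0 < m)%N by apply: ltnW.
split.
- move=> hN U W hUW.
  have hr := rank_maps hUW.
  have hle : (\rank U <= m)%N := rank_leq_col U.
  case: (ltnP (\rank U) (m-1)) => hlt; first by left.
  case: (eqVneq (\rank U) m) => hm'.
    by right; split; apply/eqP; rewrite // -hr.
  exfalso; apply: hN.
  have hU : \rank U = (m-1)%N by lia.
  have hW : \rank W = (m-1)%N by lia.
  have [a ha] := hyper hU m0.
  have [b hb] := hyper hW m0.
  have bn0 : b^T != 0.
    apply: contraT; rewrite negbK trmx_eq0 => /eqP b0.
    have : (1%:M <= W)%MS.
      by apply/row_subP => i; rewrite hb b0 mulmx0 mxE.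
    move/mxrankS; rewrite mxrank1 hW; lia.
  rewrite /vnonlin; apply: (@bigmin0' _ (fun v => v != 0) _ _ b^T bn0); rewrite /nonlin.
  apply: (@bigmin0' _ _ _ _ a) => //.
  apply: (@bigmin0' _ _ _ _ 0) => //; apply: bdist0.
  move=> x; rewrite compE /affine_fun addr0 trmxK; apply: F2_eq.
  rewrite -hb -ha; apply/idP/idP.
    by case/hUW => u hu /perm_inj <-.
  by move=> hx; apply/hUW; exists x.
- move=> hS hN.
  have p2 : (0 < 2 ^ m)%N by rewrite expn_gt0.
  have [v hv /eqP] := bigmin0 p2 hN.
  rewrite /nonlin => /eqP hv0.
  have [a _ ha] := bigmin0 p2 hv0.
  have [b _ hb] := bigmin0 p2 ha.
  have hf := bdist0E hb.
  have b0 : b = 0.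
    have := hf 0; rewrite compE /affine_fun h0 !mul0mx mxE add0r.
    by move=> <-.
  have key : forall x, (x *m a) 0 0 = (gamma x *m v^T) 0 0.
    by move=> x; rewrite -compE hf /affine_fun b0 addr0.
  pose U := kermx a; pose W := kermx v^T.
  have hUW : maps_onto (fun x => gamma x) U W.
    move=> w; rewrite /W sub_kermx mx11_eq0; split.
      move=> hw; exists ((gamma^-1)%g w); last by rewrite permKV.
      by rewrite /U sub_kermx mx11_eq0 key permKV.
    by case=> u; rewrite /U sub_kermx mx11_eq0 key => hu <-.
  have rW : \rank W = (m-1)%N by rewrite mxrank_ker mxrank_tr rank_rV hv.
  case: (hS _ _ hUW) => [[e lt] | [_ fW]].
    by move: lt; rewrite e rW ltnn.
  by move: fW; rewrite /row_full rW => /eqP; lia.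
Qed.
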